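(* Let $x,y_1,\dots,y_k$ be pairwise distinct commuting indeterminates. Then, as an identity of operators on $\mathbb{V}_N$ with coefficients in the rational function field $\mathbb{C}(x,y_1,\dots,y_k)$, $$A(x)C(y_k)\cdots C(y_1)=\frac{C(y_k)\cdots C(y_1)A(x)}{(x-y_k)\cdots(x-y_1)}-\sum_{i=1}^k\frac{C(y_k)\cdots C(y_{i+1})\,C(x)\,C(y_{i-1})\cdots C(y_1)\,A(y_i)}{(x-y_i)\prod_{j\ne i}(y_i-y_j)},$$ i.e. in the $i$-th summand the factor $C(y_i)$ is replaced by $C(x)$.
   Context: Fix $N\ge2$. $V=\mathbb{C}^2$ with basis $v_0,v_1$, ${\bf P}=\mathbb{C}[t_1,\dots,t_N]$, $\mathbb{V}_N=V^{\otimes N}\otimes{\bf P}$. Matrices on $V\otimes V$ are in the ordered basis $v_0\otimes v_0,v_0\otimes v_1,v_1\otimes v_0,v_1\otimes v_1$ (columns = images); $L(x,t)=\begin{pmatrix}1&0&0&0\\0&x+t&1&0\\0&1&0&0\\0&0&0&1\end{pmatrix}$. On $V[x]\otimes\mathbb{V}_N$ (factors $0,\dots,N$) let $M(x)=L_{0N}(x,t_N)\cdots L_{01}(x,t_1)$, with $L_{0j}(x,t_j)$ acting as $L(x,t_j)$ on factors $0,j$ (factor $0$ first) and trivially elsewhere. Define operators $A(x),C(x)$ on $\mathbb{V}_N[x]$ (polynomial in $x$) by $M(x)(v_0\otimes w)=v_0\otimes A(x)w+v_1\otimes C(x)w$; $A(y),C(y)$ denote the same operators with $x$ replaced by $y$.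 *)

(* Defs.v *)
From HB Require Import structures.
From mathcomp Require Import all_boot all_order all_algebra all_field.
From mathcomp Require Import mpoly.
Set Implicit Arguments. Unset Strict Implicit. Unset Printing Implicit Defensive.
Import Order.TTheory GRing.Theory Num.Theory.
Local Open Scope ring_scope.

(* Basis of V = C^2: v_0 <-> false, v_1 <-> true.
   A basis vector of V^{(x)N} is a state s : 'I_N -> bool (factor j+1 of the
   paper is index j : 'I_N).  An element of V^{(x)N} (x) R is a coefficient
   function w : ('I_N -> bool) -> R; an element of V (x) V^{(x)N} (x) R
   (factor 0 = auxiliary space) is u : bool -> ('I_N -> bool) -> R. *)

Section Monodromy.
Variable R : comNzRingType.
Variable N : nat.

Definition state := 'I_N -> bool.
Definition vecN := state -> R.
Definition vec0N := bool -> state -> R.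

(* matrix entry of L(x,t) on V (x) V, row (r0,rj), column (c0,cj);
   ordered basis v0v0, v0v1, v1v0, v1v1, columns = images:
   L(v0v0) = v0v0, L(v0v1) = (x+t) v0v1 + v1v0, L(v1v0) = v0v1,
   L(v1v1) = v1v1. *)
Definition Lent (x t : R) (r0 rj c0 cj : bool) : R :=
  match c0, cj, r0, rj with
  | false, false, false, false => 1
  | false, true,  false, true  => x + t
  | false, true,  true,  false => 1
  | true,  false, false, true  => 1
  | true,  true,  true,  true  => 1
  | _, _, _, _ => 0
  end.

Definition setst (s : state) (j : 'I_N) (b : bool) : state :=
  fun i => if i == j then b else s i.

Definition L0 (x : R) (t : 'I_N -> R) (j : 'I_N) (u : vec0N) : vec0N :=
  fun a' s' => \sum_(a : bool) \sum_(b : bool)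
     Lent x (t j) a' (s' j) a b * u a (setst s' j b).

(* M(x) = L_{0N}(x,t_N) ... L_{01}(x,t_1): L_{01} is applied first. *)
Definition Mop (x : R) (t : 'I_N -> R) (u : vec0N) : vec0N :=
  foldl (fun v j => L0 x t j v) u (enum 'I_N).

Definition v0tensor (w : vecN) : vec0N := fun a s => if a then 0 else w s.

(* M(x)(v_0 (x) w) = v_0 (x) A(x) w + v_1 (x) C(x) w *)
Definition Aop (x : R) (t : 'I_N -> R) (w : vecN) : vecN :=
  fun s => Mop x t (v0tensor w) false s.
Definition Cop (x : R) (t : 'I_N -> R) (w : vecN) : vecN :=
  fun s => Mop x t (v0tensor w) true s.

(* C(y_k) ... C(y_1) w  (C(y_1) applied first), y : 'I_k -> R *)
Definition Cprod (k : nat) (y : 'I_k -> R) (t : 'I_N -> R) (w : vecN) : vecN :=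
  foldl (fun v i => Cop (y i) t v) w (enum 'I_k).

End Monodromy.

(* The concrete coefficient field C(x, y_1, ..., y_k): rational functions
   in k+1 indeterminates over algC, with x = X_0 and y_i = X_i (i = 1..k). *)
Definition Kxy (k : nat) : fieldType := {fraction {mpoly algC[k.+1]}}.
Definition xind (k : nat) : Kxy k := FracField.tofrac ('X_(ord0) : {mpoly algC[k.+1]}).
Definition yind (k : nat) (i : 'I_k) : Kxy k :=
  FracField.tofrac ('X_(lift ord0 i) : {mpoly algC[k.+1]}).

Definition Rt (k N : nat) := {mpoly (Kxy k)[N]}.
Definition tind (k N : nat) (j : 'I_N) : Rt k N := 'X_j.

(* Main.v *)
Require Import Defs.
From HB Require Import structures.
From mathcomp Require Import all_boot all_order all_algebra all_field.
From mathcomp Require Import mpoly.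
From mathcomp Require Import ring.
From Stdlib Require Import FunctionalExtensionality.
Import GRing.Theory.
Local Open Scope ring_scope.

Section RTT.
Variable R : comNzRingType.
Variable N : nat.
Variable t : 'I_N -> R.

Lemma Lent_0000 (x t0 : R) : Lent x t0 false false false false = 1. Proof. by []. Qed.
Lemma Lent_0001 (x t0 : R) : Lent x t0 false false false true = 0. Proof. by []. Qed.
Lemma Lent_0010 (x t0 : R) : Lent x t0 false false true false = 0. Proof. by []. Qed.
Lemma Lent_0011 (x t0 : R) : Lent x t0 false false true true = 0. Proof. by []. Qed.
Lemma Lent_0100 (x t0 : R) : Lent x t0 false true false false = 0. Proof. by []. Qed.
Lemma Lent_0101 (x t0 : R) : Lent x t0 false true false true = x + t0. Proof. by []. Qed.
Lemma Lent_0110 (x t0 : R) : Lent x t0 false true true false = 1. Proof. by []. Qed.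
Lemma Lent_0111 (x t0 : R) : Lent x t0 false true true true = 0. Proof. by []. Qed.
Lemma Lent_1000 (x t0 : R) : Lent x t0 true false false false = 0. Proof. by []. Qed.
Lemma Lent_1001 (x t0 : R) : Lent x t0 true false false true = 1. Proof. by []. Qed.
Lemma Lent_1010 (x t0 : R) : Lent x t0 true false true false = 0. Proof. by []. Qed.
Lemma Lent_1011 (x t0 : R) : Lent x t0 true false true true = 0. Proof. by []. Qed.
Lemma Lent_1100 (x t0 : R) : Lent x t0 true true false false = 0. Proof. by []. Qed.
Lemma Lent_1101 (x t0 : R) : Lent x t0 true true false true = 0. Proof. by []. Qed.
Lemma Lent_1110 (x t0 : R) : Lent x t0 true true true false = 0. Proof. by []. Qed.
Lemma Lent_1111 (x t0 : R) : Lent x t0 true true true true = 1. Proof. by []. Qed.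
Definition LentE := (Lent_0000, Lent_0001, Lent_0010, Lent_0011, Lent_0100, Lent_0101, Lent_0110, Lent_0111, Lent_1000, Lent_1001, Lent_1010, Lent_1011, Lent_1100, Lent_1101, Lent_1110, Lent_1111).
Lemma v0T (w : vecN R N) s : v0tensor w true s = 0. Proof. by []. Qed.
Lemma v0F (w : vecN R N) s : v0tensor w false s = w s. Proof. by []. Qed.

Lemma sumb (F : bool -> R) : \sum_(b : bool) F b = F true + F false.
Proof. by rewrite big_bool. Qed.

Definition T (l : seq 'I_N) (x : R) (u : vec0N R N) : vec0N R N :=
  foldl (fun v j => L0 x t j v) u l.
Definition F l x (w : vecN R N) := T l x (v0tensor w).
Definition G l x y w a b s := F l x (F l y w b) a s.

Lemma setst_same (s : state N) j b c : setst (setst s j b) j c = setst s j c.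
Proof. apply: functional_extensionality => i; rewrite /setst; by case: eqP. Qed.
Lemma setst_at (s : state N) j b : setst s j b j = b.
Proof. by rewrite /setst eqxx. Qed.
Lemma setst_ne {i j} (h : i != j) (s : state N) b : setst s i b j = s j.
Proof. by rewrite /setst eq_sym (negbTE h). Qed.
Lemma setstC {i j} (h : i != j) (s : state N) b c :
  setst (setst s i b) j c = setst (setst s j c) i b.
Proof.
apply: functional_extensionality => k; rewrite /setst.
case: (eqVneq k j) => [kj|_]; case: (eqVneq k i) => // ki.
by move: h; rewrite -kj -ki eqxx.
Qed.

Definition Xop j (c : bool -> bool -> bool -> R) (g : bool -> vec0N R N) : vec0N R N :=
  fun a s => \sum_(b' : bool) \sum_(be : bool) c b' (s j) be * g b' a (setst s j be).

Lemma L0_X x i j c g : i != j ->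
  L0 x t i (Xop j c g) = Xop j c (fun b' => L0 x t i (g b')).
Proof.
move=> hij; have hji : j != i by rewrite eq_sym.
apply: functional_extensionality => a'; apply: functional_extensionality => s'.
rewrite /L0 /Xop !sumb /= !(setst_ne hij) !(setst_ne hji) !(setstC hij).
ring.
Qed.

Lemma T_X l x j c g : j \notin l ->
  T l x (Xop j c g) = Xop j c (fun b' => T l x (g b')).
Proof.
elim: l g => [//|i l IH] g; rewrite inE negb_or => /andP[hji hl].
by rewrite /T /= L0_X 1?eq_sym // -/(T _ _ _) IH.
Qed.

Lemma v0_X j c (h : bool -> vecN R N) :
  v0tensor (fun s => \sum_(b' : bool) \sum_(be : bool) c b' (s j) be * h b' (setst s j be))
  = Xop j c (fun b' => v0tensor (h b')).
Proof.
apply: functional_extensionality => a; apply: functional_extensionality => s.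
rewrite /v0tensor /Xop; case: a => //.
by rewrite big1 // => b' _; rewrite big1 // => be _; rewrite mulr0.
Qed.

Lemma G_rcons l j x y w a b s : j \notin l ->
  G (rcons l j) x y w a b s =
  \sum_(a' : bool) \sum_(al : bool) Lent x (t j) a (s j) a' al *
   (\sum_(b' : bool) \sum_(be : bool) Lent y (t j) b al b' be * G l x y w a' b' (setst s j be)).
Proof.
move=> hj; rewrite /G /F /T !foldl_rcons -!/(T _ _ _).
rewrite [X in v0tensor X](_ : _ = (fun s => \sum_(b' : bool) \sum_(be : bool) (fun b' sj be => Lent y (t j) b sj b' be) b' (s j) be
       * (fun b' => T l y (v0tensor w) b') b' (setst s j be))) //.
rewrite (v0_X j (fun b' sj be => Lent y (t j) b sj b' be) (fun b' => T l y (v0tensor w) b')) T_X //.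
rewrite /L0 /Xop; apply: eq_bigr => a' _; apply: eq_bigr => al _.
by rewrite setst_at; congr (_ * _); apply: eq_bigr => b' _; apply: eq_bigr => be _;
  rewrite setst_same.
Qed.

Definition Rel l x y := forall w a b s,
  \sum_(c : bool) \sum_(d : bool) Lent (x - y) 0 a b c d * G l x y w c d s = G l y x w b a s.

Lemma Rel_nil x y : Rel [::] x y.
Proof.
move=> w a b s; rewrite /G /F /T /= !sumb.
by case: a; case: b; rewrite !LentE /v0tensor /= !(mul0r, mulr0, mul1r, add0r, addr0).
Qed.

Lemma Rel_rcons l j x y : j \notin l -> Rel l x y -> Rel (rcons l j) x y.
Proof.
move=> hj IH w a b s.
rewrite !sumb !G_rcons // !sumb -!IH !sumb.
by case: a; case: b; case: (s j); rewrite !LentE; ring.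
Qed.

Lemma rtt l x y : uniq l -> Rel l x y.
Proof.
elim/last_ind: l => [_|l j IH]; first exact: Rel_nil.
rewrite rcons_uniq => /andP[hj hl]; exact: Rel_rcons hj (IH hl).
Qed.

Lemma AopE x w s : Aop x t w s = F (enum 'I_N) x w false s. Proof. by []. Qed.

Lemma AC x y w s : (x - y) * Aop x t (Cop y t w) s + Cop x t (Aop y t w) s
  = Cop y t (Aop x t w) s.
Proof.
have := rtt (enum 'I_N) x y (enum_uniq 'I_N) w false true s.
rewrite !sumb !LentE.
have -> : G (enum 'I_N) x y w false true s = Aop x t (Cop y t w) s by [].
have -> : G (enum 'I_N) x y w true false s = Cop x t (Aop y t w) s by [].
have -> : G (enum 'I_N) y x w true false s = Cop y t (Aop x t w) s by [].
move=> <-; ring.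
Qed.

Lemma CC x y w : Cop x t (Cop y t w) = Cop y t (Cop x t w).
Proof.
apply: functional_extensionality => s.
have := rtt (enum 'I_N) x y (enum_uniq 'I_N) w true true s.
rewrite !sumb !LentE.
have -> : G (enum 'I_N) x y w true true s = Cop x t (Cop y t w) s by [].
have -> : G (enum 'I_N) y x w true true s = Cop y t (Cop x t w) s by [].
move=> <-; ring.
Qed.

Lemma sumD (I : Type) (r : seq I) (F1 F2 : I -> R) :
  \sum_(i <- r) (F1 i + F2 i) = \sum_(i <- r) F1 i + \sum_(i <- r) F2 i.
Proof. exact: big_split. Qed.

Lemma L0_sum (I : Type) (r : seq I) (c : I -> R) (u : I -> vec0N R N) x j :
  L0 x t j (fun a s => \sum_(i <- r) c i * u i a s) =
  fun a s => \sum_(i <- r) c i * L0 x t j (u i) a s.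
Proof.
apply: functional_extensionality => a'; apply: functional_extensionality => s'.
rewrite /L0; under [RHS]eq_bigr => i _ do rewrite !sumb.
rewrite !sumb !mulr_sumr -!sumD; apply: eq_bigr => i _; ring.
Qed.

Lemma T_sum (I : Type) (r : seq I) (c : I -> R) l x : forall (u : I -> vec0N R N),
  T l x (fun a s => \sum_(i <- r) c i * u i a s) =
  fun a s => \sum_(i <- r) c i * T l x (u i) a s.
Proof.
elim: l => [//|j l IH] u; rewrite /T /= L0_sum -/(T _ _ _).
exact: (IH (fun i => L0 x t j (u i))).
Qed.

Lemma v0_sum (I : Type) (r : seq I) (c : I -> R) (w : I -> vecN R N) :
  v0tensor (fun s => \sum_(i <- r) c i * w i s) =
  fun a s => \sum_(i <- r) c i * v0tensor (w i) a s.
Proof.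
apply: functional_extensionality => a; apply: functional_extensionality => s.
rewrite /v0tensor; case: a => //.
by rewrite big1 // => i _; rewrite mulr0.
Qed.

Lemma Cop_sum (I : Type) (r : seq I) (c : I -> R) (w : I -> vecN R N) z s :
  Cop z t (fun s => \sum_(i <- r) c i * w i s) s = \sum_(i <- r) c i * Cop z t (w i) s.
Proof.
have -> : Cop z t (fun s => \sum_(i <- r) c i * w i s) s =
   F (enum 'I_N) z (fun s => \sum_(i <- r) c i * w i s) true s by [].
by rewrite /F v0_sum T_sum.
Qed.

Lemma Cop_comb (I : Type) (r : seq I) a0 (X : vecN R N) (b : I -> R) (Y : I -> vecN R N) z s :
  Cop z t (fun s => a0 * X s - \sum_(i <- r) b i * Y i s) s =
  a0 * Cop z t X s - \sum_(i <- r) b i * Cop z t (Y i) s.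
Proof.
pose cc := fun o : option I => if o is Some i then - b i else a0.
pose W := fun o : option I => if o is Some i then Y i else X.
have -> : (fun s => a0 * X s - \sum_(i <- r) b i * Y i s) =
          (fun s => \sum_(o <- None :: map Some r) cc o * W o s).
  apply: functional_extensionality => s'.
  by rewrite big_cons big_map -sumrN; congr (_ + _); apply: eq_bigr => i _; rewrite mulNr.
rewrite Cop_sum big_cons big_map -sumrN; congr (_ + _); apply: eq_bigr => i _.
by rewrite mulNr.
Qed.

Definition Cl (v : vecN R N) (l : seq R) := foldl (fun v a => Cop a t v) v l.

Lemma foldl_mapC (I : Type) (y : I -> R) l : forall v,
  foldl (fun v i => Cop (y i) t v) v l = Cl v (map y l).
Proof. by elim: l => [//|a l IH] v /=; rewrite IH. Qed.

Lemma CprodE k (y : 'I_k -> R) w : Cprod y t w = Cl w (map y (enum 'I_k)).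
Proof. exact: foldl_mapC. Qed.

Lemma Cl_comm z l : forall v, Cop z t (Cl v l) = Cl (Cop z t v) l.
Proof. elim: l => [//|a l IH] v /=; by rewrite IH CC. Qed.

Lemma Cl_cat_cons l1 u l2 v : Cl v (l1 ++ u :: l2) = Cl (Cop u t v) (l1 ++ l2).
Proof. by rewrite /Cl !foldl_cat /= -/(Cl _ _) -/(Cl _ _) Cl_comm. Qed.

Lemma split_in (T0 : eqType) (s : seq T0) x : x \in s -> exists p1 p2, s = p1 ++ x :: p2.
Proof. by case/splitPr => p1 p2; exists p1, p2. Qed.

Lemma Cprod_swap k (Y : 'I_k -> R) i z u v :
  Cop z t (Cprod (fun j => if j == i then u else Y j) t v) =
  Cop u t (Cprod (fun j => if j == i then z else Y j) t v).
Proof.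
have : i \in enum 'I_k by rewrite mem_enum.
move=> /split_in [p1 [p2 E]].
have := enum_uniq 'I_k; rewrite E cat_uniq /= negb_or => /and4P[_ /andP[h1 _] h2 _].
have e : forall zz, map (fun j => if j == i then zz else Y j) (enum 'I_k) =
   map Y p1 ++ zz :: map Y p2.
  move=> zz; rewrite E map_cat /= eqxx; congr (_ ++ _ :: _); apply/eq_in_map => j hj /=.
    by case: eqP hj => // ->; rewrite (negbTE h1).
  by case: eqP hj => // ->; rewrite (negbTE h2).
rewrite !CprodE !e !Cl_cat_cons !Cl_comm; congr Cl; exact: CC.
Qed.

Lemma Cprod_S k (Y : 'I_k.+1 -> R) w :
  Cprod Y t w = Cop (Y ord_max) t (Cprod (fun i => Y (widen_ord (leqnSn k) i)) t w).
Proof. by rewrite !CprodE enum_ordSr map_rcons /Cl foldl_rcons -map_comp. Qed.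

Lemma Cprod_0 (Y : 'I_0 -> R) w : Cprod Y t w = w.
Proof.
rewrite /Cprod (_ : enum 'I_0 = [::]) //.
by apply/size0nil; rewrite size_enum_ord.
Qed.

Lemma AC' x y c v s : c * (x - y) = 1 ->
  Aop x t (Cop y t v) s = c * (Cop y t (Aop x t v) s - Cop x t (Aop y t v) s).
Proof. by move=> h; rewrite -(AC x y v s) addrK mulrA h mul1r. Qed.

Lemma eq_widen k (i j : 'I_k) :
  (widen_ord (leqnSn k) j == widen_ord (leqnSn k) i) = (j == i).
Proof. by apply/eqP/eqP => [/(congr1 val) /= /val_inj|->]. Qed.

Lemma max_widen k (i : 'I_k) : (ord_max == widen_ord (leqnSn k) i) = false.
Proof. by apply/negbTE; rewrite -val_eqE /= neq_ltn ltn_ord orbT. Qed.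

Lemma widen_max k (i : 'I_k) : (widen_ord (leqnSn k) i == ord_max) = false.
Proof. by rewrite eq_sym max_widen. Qed.

Lemma Cprod_S_widen (K : Type) (g : K -> R) k x (y : 'I_k.+1 -> K) (i : 'I_k) v :
  Cprod (fun j => g (if j == widen_ord (leqnSn k) i then x else y j)) t v =
  Cop (g (y ord_max)) t
    (Cprod (fun j : 'I_k => g (if j == i then x else y (widen_ord (leqnSn k) j))) t v).
Proof.
rewrite Cprod_S max_widen; congr (Cop _ t (Cprod _ t v));
try by apply: functional_extensionality => j; rewrite eq_widen.
Qed.

Lemma Cprod_S_max (K : Type) (g : K -> R) k x (y : 'I_k.+1 -> K) v :
  Cprod (fun j => g (if j == ord_max then x else y j)) t v =
  Cop (g x) t (Cprod (fun j : 'I_k => g (y (widen_ord (leqnSn k) j))) t v).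
Proof.
rewrite Cprod_S eqxx; congr (Cop _ t (Cprod _ t v));
try by apply: functional_extensionality => j; rewrite widen_max.
Qed.

Lemma Cswap_f (K : eqType) (g : K -> R) k (Y : 'I_k -> K) i z u v :
  Cop (g z) t (Cprod (fun j => g (if j == i then u else Y j)) t v) =
  Cop (g u) t (Cprod (fun j => g (if j == i then z else Y j)) t v).
Proof.
have e : forall zz, (fun j => g (if j == i then zz else Y j)) =
                    (fun j => if j == i then g zz else g (Y j)).
  by move=> zz; apply: functional_extensionality => j; case: ifP.
by rewrite !e; exact: Cprod_swap.
Qed.

Lemma sum_swap (K : eqType) (g : K -> R) n (b : 'I_n -> R) (Y : 'I_n -> K) z u
   (v' : 'I_n -> vecN R N) s :
  \sum_(i < n) b i * Cop (g z) t (Cprod (fun j => g (if j == i then u else Y j)) t (v' i)) s =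
  \sum_(i < n) b i * Cop (g u) t (Cprod (fun j => g (if j == i then z else Y j)) t (v' i)) s.
Proof. by apply: eq_bigr => i _; rewrite Cswap_f. Qed.

Lemma sum_comb n (d : R) (a b Y : 'I_n -> R) :
  \sum_(i < n) (d * (a i - b i)) * Y i =
  d * (\sum_(i < n) a i * Y i - \sum_(i < n) b i * Y i).
Proof.
rewrite -sumrB mulr_sumr; apply: eq_bigr => i _; ring.
Qed.

Lemma sum_recr n (F0 : 'I_n.+1 -> R) :
  \sum_(i < n.+1) F0 i = \sum_(i < n) F0 (widen_ord (leqnSn n) i) + F0 ord_max.
Proof. exact: big_ord_recr. Qed.

Lemma sum0 (F0 : 'I_0 -> R) : \sum_(i < 0) F0 i = 0.
Proof. exact: big_ord0. Qed.
Lemma ifnT {A : Type} (a b : A) : (if ~~ true then a else b) = b. Proof. by []. Qed.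
Lemma ifnF {A : Type} (a b : A) : (if ~~ false then a else b) = a. Proof. by []. Qed.

Lemma prod_recr (K : fieldType) n (F0 : 'I_n.+1 -> K) :
  \prod_(i < n.+1) F0 i = (\prod_(i < n) F0 (widen_ord (leqnSn n) i)) * F0 ord_max.
Proof. exact: big_ord_recr. Qed.

Lemma prod_S_max (K : fieldType) n (F0 : 'I_n.+1 -> K) :
  \prod_(j < n.+1 | j != ord_max) F0 j = \prod_(j < n) F0 (widen_ord (leqnSn n) j).
Proof.
rewrite big_mkcond prod_recr eqxx (ifnT (F0 ord_max) 1) mulr1; apply: eq_bigr => j _.
by rewrite widen_max.
Qed.

Lemma prod_S_widen (K : fieldType) n (F0 : 'I_n.+1 -> K) i :
  \prod_(j < n.+1 | j != widen_ord (leqnSn n) i) F0 j =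
  (\prod_(j < n | j != i) F0 (widen_ord (leqnSn n) j)) * F0 ord_max.
Proof.
rewrite big_mkcond prod_recr max_widen (ifnF (F0 ord_max) 1); congr (_ * _).
by rewrite [RHS]big_mkcond; apply: eq_bigr => j _; rewrite eq_widen.
Qed.
Lemma sum_eta n m (b : 'I_n -> R) z (g : 'I_n -> 'I_m -> R) (a : 'I_n -> vecN R N) s :
  \sum_(i < n) b i * Cop z t (fun s' => Cprod (g i) t (a i) s') s =
  \sum_(i < n) b i * Cop z t (Cprod (g i) t (a i)) s.
Proof. by []. Qed.

Lemma sum_coef n (F1 F2 Y : 'I_n -> R) : (forall i, F1 i = F2 i) ->
  \sum_(i < n) F1 i * Y i = \sum_(i < n) F2 i * Y i.
Proof. by move=> h; apply: eq_bigr => i _; rewrite h. Qed.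

Lemma sum_S_widen (K : Type) (g : K -> R) k x (y : 'I_k.+1 -> K) (b : 'I_k -> R)
  (a : 'I_k -> vecN R N) s :
  \sum_(i < k) b i * Cprod (fun j => g (if j == widen_ord (leqnSn k) i then x else y j)) t (a i) s
  = \sum_(i < k) b i * Cop (g (y ord_max)) t
      (Cprod (fun j : 'I_k => g (if j == i then x else y (widen_ord (leqnSn k) j))) t (a i)) s.
Proof. by apply: eq_bigr => i _; rewrite Cprod_S_widen. Qed.

Lemma main_gen (K : fieldType) (f : K -> R)
  (fB : forall a b, f (a - b) = f a - f b) (fM : forall a b, f (a * b) = f a * f b)
  (f1 : f 1 = 1) k :
  forall (x : K) (y : 'I_k -> K), injective y -> (forall i, x != y i) -> forall w s,
  Aop (f x) t (Cprod (fun i => f (y i)) t w) s =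
    f ((\prod_(i < k) (x - y i))^-1) * Cprod (fun i => f (y i)) t (Aop (f x) t w) s
  - \sum_(i < k) f (((x - y i) * \prod_(j < k | j != i) (y i - y j))^-1)
       * Cprod (fun j => f (if j == i then x else y j)) t (Aop (f (y i)) t w) s.
Proof.
elim: k => [|k IH] x y hy hx w s.
  by rewrite !Cprod_0 sum0 big_ord0 invr1 f1 mul1r subr0.
have hy' : injective (fun i : 'I_k => y (widen_ord (leqnSn k) i)).
  by move=> i j /hy /(congr1 val) /= /val_inj.
have hx' : forall i : 'I_k, x != y (widen_ord (leqnSn k) i) by move=> i; exact: hx.
have hk : forall i : 'I_k, y ord_max != y (widen_ord (leqnSn k) i).
  move=> i; apply/eqP => /hy /(congr1 val) /= ei.
  by move: (ltn_ord i); rewrite -ei ltnn.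
have hxk : x - y ord_max != 0 by rewrite subr_eq0 hx.
have IHx := IH x _ hy' hx' w.
have IHk := IH (y ord_max) _ hy' hk w.
rewrite [Cprod (fun i => f (y i)) t w]Cprod_S.
rewrite (AC' _ _ (f (x - y ord_max)^-1)); last by rewrite -fB -fM mulVf // f1.
rewrite (functional_extensionality _ _ IHx) (functional_extensionality _ _ IHk) !Cop_comb.
rewrite (sum_swap _ _ _ _ _ x (y ord_max)) sum_eta.
have eb : forall i : 'I_k,
  f (((x - y (widen_ord (leqnSn k) i)) *
      \prod_(j < k.+1 | j != widen_ord (leqnSn k) i) (y (widen_ord (leqnSn k) i) - y j))^-1)
  = f (x - y ord_max)^-1 *
    (f (((x - y (widen_ord (leqnSn k) i)) *
         \prod_(j < k | j != i) (y (widen_ord (leqnSn k) i) - y (widen_ord (leqnSn k) j)))^-1)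
   - f (((y ord_max - y (widen_ord (leqnSn k) i)) *
         \prod_(j < k | j != i) (y (widen_ord (leqnSn k) i) - y (widen_ord (leqnSn k) j)))^-1)).
  move=> i; rewrite -fB -fM prod_S_widen; congr f.
  have hP : \prod_(j < k | j != i) (y (widen_ord (leqnSn k) i) - y (widen_ord (leqnSn k) j)) != 0.
    apply/prodf_neq0 => j hj; rewrite subr_eq0; apply/eqP => /hy' /eqP.
    by rewrite eq_sym (negbTE hj).
  have h1 : x - y (widen_ord (leqnSn k) i) != 0 by rewrite subr_eq0.
  have h2 : y ord_max - y (widen_ord (leqnSn k) i) != 0 by rewrite subr_eq0.
  have h3 : y (widen_ord (leqnSn k) i) - y ord_max != 0 by rewrite subr_eq0 eq_sym.
  by field; rewrite ?h1 ?h2 ?h3 ?hP ?hxk.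
symmetry.
rewrite sum_recr Cprod_S Cprod_S_max sum_S_widen.
rewrite (sum_coef _ _ _ _ eb) sum_comb.
rewrite (_ : f (\prod_(i < k.+1) (x - y i))^-1 =
   f (x - y ord_max)^-1 * f (\prod_(i < k) (x - y (widen_ord (leqnSn k) i)))^-1);
  last by rewrite -fM prod_recr invfM mulrC.
rewrite (_ : f ((x - y ord_max) * \prod_(j < k.+1 | j != ord_max) (y ord_max - y j))^-1 =
   f (x - y ord_max)^-1 * f (\prod_(i < k) (y ord_max - y (widen_ord (leqnSn k) i)))^-1);
  last by rewrite prod_S_max -fM invfM.
ring.
Qed.

End RTT.



Lemma Xinj n (a b : 'I_n) : ('X_a : {mpoly algC[n]}) = 'X_b -> a = b.
Proof.
move=> e; have := mcoeffXU algC a a; rewrite e mcoeffXU eqxx.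
case: eqP => // _ /eqP; by rewrite eq_sym oner_eq0.
Qed.

Lemma yind_inj k : injective (yind (k:=k)).
Proof.
move=> i j /eqP; rewrite /yind tofrac_eq => /eqP /Xinj; exact: lift_inj.
Qed.

Lemma xind_neq k (i : 'I_k) : xind k != yind i.
Proof.
rewrite /xind /yind tofrac_eq; apply/eqP => /Xinj /eqP.
by rewrite (negbTE (neq_lift _ _)).
Qed.

Theorem lemma2p8 (N k : nat) (hN : (2 <= N)%N)
    (w : vecN (Rt k N) N) (s : state N) :
  let x := xind k in
  let y := yind (k:=k) in
  let t := tind k (N:=N) in
  Aop (x%:MP) t (Cprod (fun i => (y i)%:MP) t w) s
  = ((\prod_(i < k) (x - y i))^-1)%:MP
        * Cprod (fun i => (y i)%:MP) t (Aop (x%:MP) t w) s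
    - \sum_(i < k)
        (((x - y i) * \prod_(j < k | j != i) (y i - y j))^-1)%:MP
        * Cprod (fun j => (if j == i then x else y j)%:MP) t
                (Aop ((y i)%:MP) t w) s.
Proof.
move=> x y t.
exact: (@main_gen _ _ t _ (@mpolyC N (Kxy k)) (@mpolyCB N (Kxy k)) (@mpolyCM N (Kxy k)) (mpolyC1 N _) k x y
  (@yind_inj k) (@xind_neq k) w s).
Qed.
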